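(* Let $X$ be a compact metric space and $f\colon X\to X$ a continuous map. Assume there is a sequence of closed sets $X_1\subseteq X_2\subseteq\cdots$ in $X$ with $f(X_i)\subseteq X_i$ for all $i$, $X=\bigcup_{i=1}^\infty X_i$, and $f|_{X_i}\colon X_i\to X_i$ generically chaotic for every $i$. Then $f$ is generically chaotic.
   Context: For continuous $g$ on a compact metric space $(Y,d)$, $(x,y)\in Y^2$ is a Li-Yorke pair if $\liminf_n d(g^n(x),g^n(y))=0$ and $\limsup_n d(g^n(x),g^n(y))>0$; $g$ is generically chaotic if the set of Li-Yorke pairs is residual in $Y^2$. *)

(* Defs.v *)
From Stdlib Require Import Reals Lra.
From Coquelicot Require Import Coquelicot.
Open Scope R_scope.

Record is_metric {T : Type} (d : T -> T -> R) : Prop := {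
  metric_nonneg : forall x y, 0 <= d x y;
  metric_zero   : forall x y, d x y = 0 <-> x = y;
  metric_sym    : forall x y, d x y = d y x;
  metric_tri    : forall x y z, d x z <= d x y + d y z
}.

Definition m_open {T : Type} (d : T -> T -> R) (U : T -> Prop) : Prop :=
  forall x, U x -> exists eps, 0 < eps /\ forall y, d x y < eps -> U y.

Definition m_closed {T : Type} (d : T -> T -> R) (C : T -> Prop) : Prop :=
  m_open d (fun x => ~ C x).

Definition m_compact {T : Type} (d : T -> T -> R) : Prop :=
  forall (I : Type) (U : I -> T -> Prop),
    (forall i, m_open d (U i)) ->
    (forall x, exists i, U i x) ->
    exists l : list I, forall x, exists i, List.In i l /\ U i x.

Definition m_continuous {T : Type} (d : T -> T -> R) (g : T -> T) : Prop :=
  forall x eps, 0 < eps -> exists delta, 0 < delta /\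
    forall y, d x y < delta -> d (g x) (g y) < eps.

(** Max metric on T*T; it induces the product topology on Y^2. *)
Definition d2 {T : Type} (d : T -> T -> R) (p q : T * T) : R :=
  Rmax (d (fst p) (fst q)) (d (snd p) (snd q)).

(** Relative topology on a subset S of T*T (S will be A x A, A a subspace). *)
Definition rel_open2 {T : Type} (d : T -> T -> R) (S U : T * T -> Prop) : Prop :=
  (forall p, U p -> S p) /\
  forall p, U p -> exists eps, 0 < eps /\
    forall q, S q -> d2 d p q < eps -> U q.

Definition rel_dense2 {T : Type} (d : T -> T -> R) (S U : T * T -> Prop) : Prop :=
  forall p, S p -> forall eps, 0 < eps -> exists q, U q /\ d2 d p q < eps.

Definition residual2 {T : Type} (d : T -> T -> R) (S L : T * T -> Prop) : Prop :=
  exists U : nat -> T * T -> Prop,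
    (forall n, rel_open2 d S (U n)) /\
    (forall n, rel_dense2 d S (U n)) /\
    (forall p, S p -> (forall n, U n p) -> L p).

(** Li-Yorke pair for g (the metric d restricted to a subspace is still d). *)
Definition LiYorke_pair {T : Type} (d : T -> T -> R) (g : T -> T) (p : T * T) : Prop :=
  let u := fun n : nat => d (Nat.iter n g (fst p)) (Nat.iter n g (snd p)) in
  LimInf_seq u = Finite 0 /\ Rbar_lt (Finite 0) (LimSup_seq u).

(** g restricted to the (g-invariant) subspace A is generically chaotic:
    Li-Yorke pairs of g|_A are residual in A x A. *)
Definition gen_chaotic_on {T : Type} (d : T -> T -> R) (g : T -> T) (A : T -> Prop) : Prop :=
  residual2 d (fun p => A (fst p) /\ A (snd p)) (LiYorke_pair d g).

Definition gen_chaotic {T : Type} (d : T -> T -> R) (g : T -> T) : Prop :=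
  gen_chaotic_on d g (fun _ => True).

(* Main.v *)
Require Import Defs.
From Stdlib Require Import Reals Lra Lia Classical ClassicalEpsilon Cantor List.
From Coquelicot Require Import Coquelicot.
Open Scope R_scope.

Section Aux.
Context {T : Type} (d : T -> T -> R) (Hm : is_metric d).

Lemma dxx x : d x x = 0.
Proof. apply (metric_zero d Hm). reflexivity. Qed.

Lemma d2_refl p : Defs.d2 d p p = 0.
Proof. unfold Defs.d2. rewrite !dxx. unfold Rmax. destruct (Rle_dec 0 0); lra. Qed.

Lemma d2_tri p q r : Defs.d2 d p r <= Defs.d2 d p q + Defs.d2 d q r.
Proof.
  unfold Defs.d2. apply Rmax_lub.
  - pose proof (metric_tri d Hm (fst p) (fst q) (fst r)).
    pose proof (Rmax_l (d (fst p) (fst q)) (d (snd p) (snd q))).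
    pose proof (Rmax_l (d (fst q) (fst r)) (d (snd q) (snd r))). lra.
  - pose proof (metric_tri d Hm (snd p) (snd q) (snd r)).
    pose proof (Rmax_r (d (fst p) (fst q)) (d (snd p) (snd q))).
    pose proof (Rmax_r (d (fst q) (fst r)) (d (snd q) (snd r))). lra.
Qed.

Definition bP (Xs : nat -> T -> Prop) (k : nat) (cr cr' : T * R) : Prop :=
  0 < snd cr' /\ (forall z, d (fst cr') z <= snd cr' -> d (fst cr) z < snd cr) /\
  (forall z, d (fst cr') z <= snd cr' -> ~ Xs k z).

Definition bstep Xs k (cr : T * R) : T * R := epsilon (inhabits cr) (bP Xs k cr).

Fixpoint bseq Xs (x0 : T * R) (k : nat) : T * R :=
  match k with O => x0 | S k => bstep Xs k (bseq Xs x0 k) end.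

Lemma in_le_max k l : In k l -> (k <= fold_right max 0 l)%nat.
Proof. induction l; simpl; [tauto|]. intros [->|H]; [lia|]. specialize (IHl H). lia. Qed.

Lemma baire (Xs : nat -> T -> Prop) : m_compact d -> (forall i, m_closed d (Xs i)) ->
  (forall x, exists i, Xs i x) -> forall x eps, 0 < eps ->
  exists i c r, 0 < r /\ (forall z, d c z < r -> d x z < eps) /\ (forall z, d c z < r -> Xs i z).
Proof.
  intros Hc Hcl Hcov x eps Heps. apply NNPP; intro Hn.
  assert (H : forall i c r, 0 < r -> (forall z, d c z < r -> d x z < eps) ->
     exists z, d c z < r /\ ~ Xs i z).
  { intros i c r Hr Hb. apply NNPP; intro H0. apply Hn. exists i, c, r.
    split; [exact Hr|]. split; [exact Hb|]. intros z Hz. apply NNPP; intro H1.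
    apply H0. exists z; auto. }
  set (s := bseq Xs (x, eps)).
  assert (Inv : forall k, (0 < snd (s k) /\ forall z, d (fst (s k)) z < snd (s k) -> d x z < eps)
                  /\ bP Xs k (s k) (s (S k))).
  { induction k.
    - assert (I0 : 0 < snd (s O) /\ forall z, d (fst (s O)) z < snd (s O) -> d x z < eps).
      { simpl. split; auto. }
      split; [exact I0|].
      change (s 1%nat) with (bstep Xs O (s O)). unfold bstep. apply epsilon_spec.
      destruct I0 as [Hr Hb].
      destruct (H 0%nat _ _ Hr Hb) as [z [Hz Hnz]].
      destruct (Hcl 0%nat z Hnz) as [dl [Hdl Hdl']].
      exists (z, Rmin dl (snd (s O) - d (fst (s O)) z) / 2). unfold bP; simpl.
      assert (0 < Rmin dl (snd (s O) - d (fst (s O)) z)) by (apply Rmin_pos; simpl in *; lra).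
      pose proof (Rmin_l dl (snd (s O) - d (fst (s O)) z)).
      pose proof (Rmin_r dl (snd (s O) - d (fst (s O)) z)). simpl in *.
      split; [lra|]. split.
      + intros w Hw. pose proof (metric_tri d Hm x z w). lra.
      + intros w Hw. apply Hdl'. lra.
    - destruct IHk as [[Hr Hb] [Hr' [Hn1 Hn2]]].
      assert (I1 : 0 < snd (s (S k)) /\ forall z, d (fst (s (S k))) z < snd (s (S k)) -> d x z < eps).
      { split; [exact Hr'|]. intros z Hz. apply Hb, Hn1. lra. }
      split; [exact I1|].
      change (s (S (S k))) with (bstep Xs (S k) (s (S k))). unfold bstep. apply epsilon_spec.
      destruct I1 as [Hr1 Hb1].
      destruct (H (S k) _ _ Hr1 Hb1) as [z [Hz Hnz]].
      destruct (Hcl (S k) z Hnz) as [dl [Hdl Hdl']].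
      unfold bP. set (c := fst (s (S k))) in *. set (r := snd (s (S k))) in *.
      exists (z, Rmin dl (r - d c z) / 2). cbn [fst snd].
      assert (0 < Rmin dl (r - d c z)) by (apply Rmin_pos; lra).
      pose proof (Rmin_l dl (r - d c z)).
      pose proof (Rmin_r dl (r - d c z)).
      split; [lra|]. split.
      + intros w Hw. pose proof (metric_tri d Hm c z w). lra.
      + intros w Hw. apply Hdl'. lra. }
  assert (Nest : forall k j, (k <= j)%nat -> forall z, d (fst (s j)) z <= snd (s j) ->
                 d (fst (s k)) z <= snd (s k)).
  { intros k j Hkj. induction Hkj; auto.
    intros z Hz. apply IHHkj. destruct (Inv m) as [_ [_ [Hn1 _]]].
    left. apply Hn1. exact Hz. }
  destruct (Hc nat (fun k y => snd (s k) < d (fst (s k)) y)) as [l Hl].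
  - intros k y Hy. exists (d (fst (s k)) y - snd (s k)). split; [lra|].
    intros y' Hy'. pose proof (metric_tri d Hm (fst (s k)) y' y).
    pose proof (metric_sym d Hm y' y). lra.
  - intros y. apply NNPP; intro Hy.
    destruct (Hcov y) as [i Hi].
    destruct (Inv i) as [_ [_ [_ Hn2]]].
    apply (Hn2 y); [|exact Hi].
    apply Rnot_lt_le. intro Hlt. apply Hy. exists (S i). exact Hlt.
  - set (K := fold_right max 0%nat l).
    destruct (Hl (fst (s K))) as [k [Hk Hlt]].
    pose proof (Nest k K (in_le_max k l Hk) (fst (s K))).
    rewrite dxx in H0. destruct (Inv K) as [[HrK _] _].
    specialize (H0 (Rlt_le _ _ HrK)). lra.
Qed.
End Aux.

Theorem lemma34 (T : Type) (d : T -> T -> R) (f : T -> T)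
  (Xs : nat -> T -> Prop) :
  is_metric d ->
  m_compact d ->
  m_continuous d f ->
  (forall i, m_closed d (Xs i)) ->
  (forall i x, Xs i x -> Xs (S i) x) ->
  (forall i x, Xs i x -> Xs i (f x)) ->
  (forall x, exists i, Xs i x) ->
  (forall i, gen_chaotic_on d f (Xs i)) ->
  gen_chaotic d f.
Proof.
  intros Hm Hc _ Hcl Hmono _ Hcov Hgc.
  assert (Hmon : forall i j x, (i <= j)%nat -> Xs i x -> Xs j x).
  { intros i j x Hij. induction Hij; auto. }
  unfold gen_chaotic_on, residual2 in Hgc.
  set (Uf := fun i => proj1_sig (constructive_indefinite_description _ (Hgc i))).
  assert (HU := fun i => proj2_sig (constructive_indefinite_description _ (Hgc i))).
  fold Uf in HU. simpl in HU.
  set (Sx := fun i (p : T * T) => Xs i (fst p) /\ Xs i (snd p)).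
  set (Oi := fun i p => exists e, 0 < e /\ forall q, Defs.d2 d p q < e -> Sx i q).
  assert (Oopen : forall i p, Oi i p -> exists e, 0 < e /\ forall q, Defs.d2 d p q < e -> Oi i q).
  { intros i p [e [He Hq]]. exists (e/2). split; [lra|]. intros q Hpq.
    exists (e/2). split; [lra|]. intros z Hz. apply Hq.
    pose proof (d2_tri d Hm p q z). lra. }
  assert (OS : forall i p, Oi i p -> Sx i p).
  { intros i p [e [He Hq]]. apply Hq. rewrite d2_refl; auto. }
  set (V := fun i n p => (exists e, 0 < e /\ forall q, Defs.d2 d p q < e -> ~ Oi i q)
                         \/ (Oi i p /\ Uf i n p)).
  exists (fun m => match m with O => fun p => exists i, Oi i p
                   | S m => V (fst (of_nat m)) (snd (of_nat m)) end).
  split; [|split].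
  - intros [|m]; split; [tauto| |tauto|].
    + intros p [i Hi]. destruct (Oopen i p Hi) as [e [He Hq]].
      exists e. split; auto. intros q _ Hpq. exists i. auto.
    + set (i := fst (of_nat m)). set (n := snd (of_nat m)).
      intros p [[e [He Hq]] | [HO HUp]].
      * exists (e/2). split; [lra|]. intros q _ Hpq. left. exists (e/2). split; [lra|].
        intros z Hz. apply Hq. pose proof (d2_tri d Hm p q z). lra.
      * destruct (Oopen i p HO) as [e3 [He3 Hq3]].
        destruct HO as [e1 [He1 Hq1]].
        destruct (HU i) as [Hop _]. destruct (Hop n) as [_ Hop2].
        destruct (Hop2 p HUp) as [e2 [He2 Hq2]].
        exists (Rmin e1 (Rmin e2 e3)).
        pose proof (Rmin_l e1 (Rmin e2 e3)). pose proof (Rmin_r e1 (Rmin e2 e3)).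
        pose proof (Rmin_l e2 e3). pose proof (Rmin_r e2 e3).
        split; [repeat apply Rmin_pos; auto|].
        intros q _ Hpq. right. split.
        -- apply Hq3. lra.
        -- apply Hq2; [apply Hq1; lra | lra].
  - intros [|m] p _ eps Heps.
    + destruct p as [x y].
      assert (He2 : 0 < eps) by lra.
      destruct (baire d Hm Xs Hc Hcl Hcov x eps He2) as [i1 [c1 [r1 [Hr1 [Hb1 Hx1]]]]].
      destruct (baire d Hm Xs Hc Hcl Hcov y eps He2) as [i2 [c2 [r2 [Hr2 [Hb2 Hx2]]]]].
      exists (c1, c2). split.
      * exists (i1 + i2)%nat. exists (Rmin r1 r2). split; [apply Rmin_pos; auto|].
        intros q Hq. unfold Defs.d2 in Hq; simpl in Hq.
        pose proof (Rmin_l r1 r2). pose proof (Rmin_r r1 r2).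
        pose proof (Rmax_l (d c1 (fst q)) (d c2 (snd q))).
        pose proof (Rmax_r (d c1 (fst q)) (d c2 (snd q))).
        split; simpl.
        -- apply (Hmon i1); [lia|]. apply Hx1. lra.
        -- apply (Hmon i2); [lia|]. apply Hx2. lra.
      * unfold Defs.d2; simpl. apply Rmax_lub_lt.
        -- apply Hb1. rewrite dxx; auto.
        -- apply Hb2. rewrite dxx; auto.
    + set (i := fst (of_nat m)). set (n := snd (of_nat m)).
      destruct (classic (exists q, Oi i q /\ Defs.d2 d p q < eps/2)) as [[q [HOq Hpq]] | Hno].
      * pose proof (OS i q HOq) as HSq.
        destruct HOq as [dl [Hdl Hqdl]].
        destruct (HU i) as [_ [Hden _]].
        assert (Hmn : 0 < Rmin (eps/2) (dl/2)) by (apply Rmin_pos; lra).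
        destruct (Hden n q HSq _ Hmn) as [r [HUr Hqr]].
        pose proof (Rmin_l (eps/2) (dl/2)). pose proof (Rmin_r (eps/2) (dl/2)).
        exists r. split.
        -- right. split; [|exact HUr]. exists (dl/2). split; [lra|].
           intros z Hz. apply Hqdl. pose proof (d2_tri d Hm q r z). lra.
        -- pose proof (d2_tri d Hm p q r). lra.
      * exists p. split.
        -- left. exists (eps/2). split; [lra|]. intros q Hq HOq. apply Hno. exists q. auto.
        -- rewrite d2_refl; auto.
  - intros p _ Hall. destruct (Hall 0%nat) as [i Hi].
    destruct (HU i) as [_ [_ Hfin]]. apply Hfin; [apply OS; exact Hi|].
    intros n. specialize (Hall (S (to_nat (i, n)))). change (V (fst (of_nat (to_nat (i,n)))) (snd (of_nat (to_nat (i,n)))) p) in Hall.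
    rewrite cancel_of_to in Hall. simpl in Hall.
    destruct Hall as [[e [He Hq]] | [_ HUp]]; [|exact HUp].
    exfalso. apply (Hq p); [rewrite d2_refl; auto | exact Hi].
Qed.
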